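(* Let $n\geq 2$. Let $\mathbf{P}\subseteq\mathbf{Q}$ be structures in $\mathcal{PO}_{n,<_1,\ldots,<_n}$ ($\mathbf{P}$ a substructure of $\mathbf{Q}$). If $f$ is an embedding of $\mathbf{P}$ into $\mathbf{D}_{n,<_1,\ldots,<_n}$, then there is an embedding $g$ of $\mathbf{Q}$ into $\mathbf{D}_{n,<_1,\ldots,<_n}$ which extends $f$.
   Context: Fix $n\geq 2$ and a set $D_n\subseteq\mathbb{Q}^n$ which is dense in $\mathbb{Q}^n$ (product topology) and such that no two distinct points of $D_n$ share a common coordinate. $\mathbf{D}_{n,<_1,\ldots,<_n}=(D_n,<,<_1,\ldots,<_n)$ where $<$ is the product order ($\mathbf{a}<\mathbf{b}$ iff $a_i\leq b_i$ for all $i$ and $\mathbf{a}\neq\mathbf{b}$) and $\mathbf{a}<_i\mathbf{b}$ iff $a_i<b_i$. $\mathcal{PO}_{n,<_1,\ldots,<_n}$ is the class of all finite structures $(P,<,<_1,\ldots,<_n)$ where $<_1,\ldots,<_n$ are strict linear orders on $P$ and $a<b$ iff $a<_ib$ for all $i\leq n$. Embeddings are injective maps preserving and reflecting each of $<,<_1,\ldots,<_n$; substructures carry the induced relations. *)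

(* Defs.v *)
From mathcomp Require Import all_boot all_order all_algebra.
Set Implicit Arguments. Unset Strict Implicit. Unset Printing Implicit Defensive.
Import Order.TTheory GRing.Theory Num.Theory.
Local Open Scope ring_scope.

Definition pt (n : nat) := 'I_n -> rat.

Definition prod_lt n (a b : pt n) : Prop := (forall i, a i <= b i) /\ a <> b.

Definition coord_lt n (i : 'I_n) (a b : pt n) : Prop := a i < b i.

(* D is dense in Q^n (product topology): D meets every nonempty basic open
   set, i.e. every product of nonempty open rational intervals. *)
Definition dense_in n (D : pt n -> Prop) : Prop :=
  forall a b : pt n, (forall i, a i < b i) ->
    exists d, D d /\ forall i, a i < d i /\ d i < b i.

Definition distinct_coords n (D : pt n -> Prop) : Prop :=
  forall a b, D a -> D b -> a <> b -> forall i, a i <> b i.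

Definition strict_linear (T : finType) (r : rel T) : Prop :=
  irreflexive r /\ transitive r /\ (forall x y, x != y -> r x y || r y x).

Definition is_PO n (T : finType) (lt : rel T) (lts : 'I_n -> rel T) : Prop :=
  (forall i, strict_linear (lts i)) /\
  (forall x y, lt x y <-> (forall i, lts i x y)).

(* f restricted to A is an embedding of the substructure of (T, lt, lts)
   induced on A into D_{n,<_1,...,<_n} = (D, prod_lt, coord_lt ...):
   injective, lands in D, preserves and reflects < and each <_i. *)
Definition embedding_on n (T : finType) (lt : rel T) (lts : 'I_n -> rel T)
    (A : {set T}) (D : pt n -> Prop) (f : T -> pt n) : Prop :=
  (forall x, x \in A -> D (f x)) /\
  {in A &, injective f} /\
  (forall x y, x \in A -> y \in A ->
     (lt x y <-> prod_lt (f x) (f y)) /\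
     (forall i, lts i x y <-> coord_lt i (f x) (f y))).

(* Main.v *)
Require Import Defs.
From mathcomp Require Import all_boot all_order all_algebra.
From mathcomp Require Import lra.
Set Implicit Arguments. Unset Strict Implicit. Unset Printing Implicit Defensive.
Import Order.TTheory GRing.Theory Num.Theory.
Local Open Scope ring_scope.

Lemma seq_max (s : seq rat) : s != [::] ->
  exists2 m, m \in s & forall a, a \in s -> a <= m.
Proof.
elim: s => [//|a s IH] _.
case: s IH => [|b s] IH.
  by exists a; rewrite ?inE // => c; rewrite inE => /eqP->.
have [m ms Hm] := IH isT.
exists (if a <= m then m else a).
  by case: ifP; rewrite !inE ?eqxx ?orbT //; move: ms; rewrite inE => ->; rewrite orbT.
move=> c; rewrite inE => /orP[/eqP->|/Hm cm]; case: ifP => // am.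
move/negbT: am; rewrite -ltNge => /ltW; exact: le_trans.
Qed.

Lemma seq_min (s : seq rat) : s != [::] ->
  exists2 m, m \in s & forall a, a \in s -> m <= a.
Proof.
elim: s => [//|a s IH] _.
case: s IH => [|b s] IH.
  by exists a; rewrite ?inE // => c; rewrite inE => /eqP->.
have [m ms Hm] := IH isT.
exists (if m <= a then m else a).
  by case: ifP; rewrite !inE ?eqxx ?orbT //; move: ms; rewrite inE => ->; rewrite orbT.
move=> c; rewrite inE => /orP[/eqP->|/Hm cm]; case: ifP => // am.
move/negbT: am; rewrite -ltNge => /ltW am; exact: le_trans am cm.
Qed.

Lemma seq_bounds (s t : seq rat) : (forall a b, a \in s -> b \in t -> a < b) ->
  exists l u, [/\ l < u, forall a, a \in s -> a <= l & forall b, b \in t -> u <= b].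
Proof.
move=> H.
case: (eqVneq s [::]) => [->|sn]; case: (eqVneq t [::]) => [->|tn].
- by exists 0, 1; split.
- have [u ut Hu] := seq_min tn; exists (u-1), u; split => //; lra.
- have [l ls Hl] := seq_max sn; exists l, (l+1); split => //; lra.
- have [l ls Hl] := seq_max sn; have [u ut Hu] := seq_min tn.
  by exists l, u; split => //; apply: H.
Qed.

Lemma prod_lt_coord n (i0 : 'I_n) (p q : pt n) : (forall i, p i != q i) ->
  prod_lt p q <-> (forall i, p i < q i).
Proof.
move=> H; split.
- by case=> Hle _ i; rewrite lt_neqAle H Hle.
- move=> Hlt; split; first by move=> i; exact: ltW.
  by move=> E; have := H i0; rewrite E eqxx.
Qed.

Lemma extend1 n (i0 : 'I_n) (D : pt n -> Prop) (Ddense : dense_in D)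
  (Ddist : distinct_coords D)
  (T : finType) (lt : rel T) (lts : 'I_n -> rel T) (HQ : is_PO lt lts)
  (A : {set T}) (f : T -> pt n) (Hf : embedding_on lt lts A D f) x :
  x \notin A ->
  exists f', embedding_on lt lts (x |: A) D f' /\ forall y, y \in A -> f' y = f y.
Proof.
move=> xA.
case: HQ => Hsl Hlt.
case: Hf => HD [Hinj Hrel].
have Hb : forall i, exists lu : rat * rat, [/\ lu.1 < lu.2,
   forall a, a \in A -> lts i a x -> f a i <= lu.1 &
   forall b, b \in A -> lts i x b -> lu.2 <= f b i].
  move=> i.
  case: (@seq_bounds [seq f a i | a <- enum A & lts i a x]
     [seq f b i | b <- enum A & lts i x b]) => [|l [u [Hlu Hl Hu]]].
  - move=> a' b' /mapP[a]; rewrite mem_filter mem_enum => /andP[ax aA] ->.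
    move=> /mapP[b]; rewrite mem_filter mem_enum => /andP[xb bA] ->.
    have [_ [tr _]] := Hsl i.
    by apply/((Hrel a b aA bA).2 i); exact: (tr x).
  - exists (l, u); split => //=.
    + move=> a aA ax; apply: Hl; apply/mapP; exists a => //.
      by rewrite mem_filter ax mem_enum.
    + move=> b bA xb; apply: Hu; apply/mapP; exists b => //.
      by rewrite mem_filter xb mem_enum.
have [lu Hlu] := fin_all_exists Hb.
have [d [dD Hd]] := Ddense (fun i => (lu i).1) (fun i => (lu i).2)
   (fun i => let: And3 h _ _ := Hlu i in h).
have K1 : forall z i, z \in A -> lts i x z -> d i < f z i.
  move=> z i zA xz; have [_ _ Hu] := Hlu i.
  exact: lt_le_trans (Hd i).2 (Hu z zA xz).
have K2 : forall z i, z \in A -> lts i z x -> f z i < d i.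
  move=> z i zA zx; have [_ Hl _] := Hlu i.
  exact: le_lt_trans (Hl z zA zx) (Hd i).1.
have Ktot : forall z i, z \in A -> lts i x z || lts i z x.
  move=> z i zA; have [_ [_ tot]] := Hsl i; apply: tot.
  by apply/eqP => E; move: xA; rewrite E zA.
have Kne : forall z i, z \in A -> d i != f z i.
  move=> z i zA; case/orP: (Ktot z i zA) => [/(K1 z i zA)|/(K2 z i zA)] h.
  - by rewrite lt_eqF.
  - by rewrite gt_eqF.
have Kx : forall z i, z \in A -> (lts i x z <-> d i < f z i).
  move=> z i zA; split; first exact: K1.
  move=> h; case/orP: (Ktot z i zA) => // /(K2 z i zA) h'.
  by have := lt_trans h h'; rewrite ltxx.
have Kz : forall z i, z \in A -> (lts i z x <-> f z i < d i).
  move=> z i zA; split; first exact: K2.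
  move=> h; case/orP: (Ktot z i zA) => // /(K1 z i zA) h'.
  by have := lt_trans h h'; rewrite ltxx.
have ltirr : forall y, ~ lt y y.
  move=> y /Hlt /(_ i0); by have [irr _] := Hsl i0; rewrite irr.
pose f' := fun y => if y == x then d else f y.
have f'x : f' x = d by rewrite /f' eqxx.
have f'A : forall y, y \in A -> f' y = f y.
  move=> y yA; rewrite /f'; case: eqP => // yx.
  by move: xA; rewrite -yx yA.
exists f'; split => //.
split.
  move=> y; rewrite in_setU1 => /predU1P[->|yA]; rewrite ?f'x ?f'A //.
  exact: HD.
split.
  move=> y z; rewrite !in_setU1 => /predU1P[->|yA] /predU1P[->|zA];
    rewrite ?f'x ?f'A // => E.
  - by have := Kne z i0 zA; rewrite E eqxx.
  - by have := Kne y i0 yA; rewrite E eqxx.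
  - exact: Hinj.
move=> y z; rewrite !in_setU1 => /predU1P[->|yA] /predU1P[->|zA];
  rewrite ?f'x ?f'A //.
- split.
    by split => [/ltirr|[_ []]].
  move=> i; rewrite /coord_lt ltxx; have [irr _] := Hsl i; rewrite irr.
  by [].
- split; last by move=> i; exact: Kx.
  split => [/Hlt H | /(prod_lt_coord i0 (fun i => Kne z i zA)) H].
  + by apply/(prod_lt_coord i0 (fun i => Kne z i zA)) => i; apply/(Kx z i zA).
  + by apply/Hlt => i; apply/(Kx z i zA).
- have Kne' : forall i, f y i != d i by move=> i; rewrite eq_sym Kne.
  split; last by move=> i; exact: Kz.
  split => [/Hlt H | /(prod_lt_coord i0 Kne') H].
  + by apply/(prod_lt_coord i0 Kne') => i; apply/(Kz y i yA).
  + by apply/Hlt => i; apply/(Kz y i yA).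
- exact: Hrel.
Qed.

Lemma extend_all n (i0 : 'I_n) (D : pt n -> Prop) (Ddense : dense_in D)
  (Ddist : distinct_coords D)
  (T : finType) (lt : rel T) (lts : 'I_n -> rel T) (HQ : is_PO lt lts) :
  forall k (A : {set T}) (f : T -> pt n), #|~: A| = k ->
  embedding_on lt lts A D f ->
  exists g : T -> pt n,
    embedding_on lt lts [set: T] D g /\ (forall x, x \in A -> g x = f x).
Proof.
elim => [|k IH] A f Hk Hf.
  exists f; split => //.
  have -> : [set: T] = A => //.
  move/cards0_eq: Hk => HA; apply/setP => y; rewrite inE.
  by have := in_set0 y; rewrite -HA inE => /negbFE.
have [x xA] : exists x, x \in ~: A by apply/set0Pn; rewrite -card_gt0 Hk.
have xA' : x \notin A by rewrite inE in xA.
have [f' [Hf' Hag]] := extend1 i0 Ddense Ddist HQ Hf xA'.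
have Hk' : #|~: (x |: A)| = k.
  rewrite setCU setIC -setDE.
  by move: Hk; rewrite (cardsD1 x) xA add1n => [[]].
have [g [Hg Hag']] := IH _ _ Hk' Hf'.
exists g; split => // y yA.
by rewrite Hag' ?Hag // in_setU1 yA orbT.
Qed.

Close Scope ring_scope.

Theorem lemma3p1 (n : nat) (hn : (2 <= n)%N) (D : pt n -> Prop)
  (Ddense : dense_in D) (Ddist : distinct_coords D)
  (T : finType) (lt : rel T) (lts : 'I_n -> rel T) (HQ : is_PO lt lts)
  (A : {set T}) (f : T -> pt n) (Hf : embedding_on lt lts A D f) :
  exists g : T -> pt n,
    embedding_on lt lts [set: T] D g /\ (forall x, x \in A -> g x = f x).
Proof.
exact: (extend_all (Ordinal (ltnW hn)) Ddense Ddist HQ (erefl _) Hf).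
Qed.
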